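(* Let $G=A\oplus B$ be an abelian group such that $\mathrm{Hom}(B,A)=\{0\}$. Then $G$ is strongly co-Hopfian if and only if both $A$ and $B$ are strongly co-Hopfian.
   Context: All groups are additive abelian groups. A group $G$ is strongly co-Hopfian (Sco-H) if for every endomorphism $f$ of $G$ the descending chain $\operatorname{im} f\supseteq \operatorname{im} f^2\supseteq\cdots\supseteq \operatorname{im} f^n\supseteq\cdots$ is stationary, i.e. $f^n(G)=f^{n+1}(G)$ for some $n\in\mathbb N$. *)

(* Defs.v *)
From HB Require Import structures.
From mathcomp Require Import all_boot all_algebra.
Set Implicit Arguments. Unset Strict Implicit. Unset Printing Implicit Defensive.
Import GRing.Theory.
Local Open Scope ring_scope.

Definition im_iter (G : zmodType) (f : G -> G) (n : nat) : G -> Prop :=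
  fun y => exists x, y = iter n f x.

(* Strongly co-Hopfian: for every endomorphism f, the chain
   im f ⊇ im f^2 ⊇ ... is stationary, i.e. im f^n = im f^(n+1) for some n. *)
Definition strongly_coHopfian (G : zmodType) : Prop :=
  forall f : {additive G -> G}, exists n : nat,
    forall y : G, im_iter f n y <-> im_iter f n.+1 y.

Definition trivial_Hom (B A : zmodType) : Prop :=
  forall (h : {additive B -> A}) (b : B), h b = 0.

(* Main.v *)
Require Import Defs.
From mathcomp Require Import all_boot all_algebra.
From HB Require Import structures.
Set Implicit Arguments. Unset Strict Implicit. Unset Printing Implicit Defensive.
Import GRing.Theory.
Local Open Scope ring_scope.

Section Maps.
Variables (A B : zmodType).

Lemma pair_sub (a a' : A) (b b' : B) : ((a, b) - (a', b') : A * B) = (a - a', b - b').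
Proof. by []. Qed.

Lemma pair_add (a a' : A) (b b' : B) : ((a, b) + (a', b') : A * B) = (a + a', b + b').
Proof. by []. Qed.

Definition mapL (f : {additive A -> A}) : A * B -> A * B := fun x => (f x.1, x.2).
Lemma mapL_morph f : zmod_morphism (mapL f).
Proof. by case=> a b [a' b']; rewrite /mapL /= raddfB. Qed.
HB.instance Definition _ f := GRing.isZmodMorphism.Build _ _ (mapL f) (mapL_morph f).

Definition mapR (g : {additive B -> B}) : A * B -> A * B := fun x => (x.1, g x.2).
Lemma mapR_morph g : zmod_morphism (mapR g).
Proof. by case=> a b [a' b']; rewrite /mapR /= raddfB. Qed.
HB.instance Definition _ g := GRing.isZmodMorphism.Build _ _ (mapR g) (mapR_morph g).

Variable phi : {additive (A * B) -> (A * B)}.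

Definition hB : B -> A := fun b => (phi (0, b)).1.
Lemma hB_morph : zmod_morphism hB.
Proof. move=> x y; rewrite /hB.
  have -> : ((0, x - y) : A * B) = (0, x) - (0, y) by rewrite pair_sub subr0.
  by rewrite raddfB.
Qed.
HB.instance Definition _ := GRing.isZmodMorphism.Build _ _ hB hB_morph.

Definition alpha : A -> A := fun a => (phi (a, 0)).1.
Lemma alpha_morph : zmod_morphism alpha.
Proof. move=> x y; rewrite /alpha.
  have -> : ((x - y, 0) : A * B) = (x, 0) - (y, 0) by rewrite pair_sub subr0.
  by rewrite raddfB.
Qed.
HB.instance Definition _ := GRing.isZmodMorphism.Build _ _ alpha alpha_morph.

Definition delta : B -> B := fun b => (phi (0, b)).2.
Lemma delta_morph : zmod_morphism delta.
Proof. move=> x y; rewrite /delta.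
  have -> : ((0, x - y) : A * B) = (0, x) - (0, y) by rewrite pair_sub subr0.
  by rewrite raddfB.
Qed.
HB.instance Definition _ := GRing.isZmodMorphism.Build _ _ delta delta_morph.

End Maps.

Section Gen.
Variables (G : zmodType) (f : {additive G -> G}).

Lemma iter_add n x y : iter n f (x + y) = iter n f x + iter n f y.
Proof. by elim: n => //= n IH; rewrite IH raddfD. Qed.

Lemma im_le n k y : im_iter f (n + k)%N y -> im_iter f n y.
Proof. by case=> x ->; exists (iter k f x); rewrite iterD. Qed.

Lemma im_prop n : (forall y, im_iter f n y <-> im_iter f n.+1 y) ->
  forall k y, im_iter f n y -> im_iter f (n + k)%N y.
Proof.
move=> Hn; elim=> [|k IH] y Hy; first by rewrite addn0.
have [x ->] := IH y Hy.
rewrite (addnC n k) iterD.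
have [x' Ex'] : im_iter f n.+1 (iter n f x) by apply/Hn; exists x.
by exists x'; rewrite Ex' -iterD !addnS (addnC k n).
Qed.
End Gen.

Lemma iter_mapL (A B : zmodType) (f : {additive A -> A}) n (x : A * B) :
  iter n (mapL f) x = (iter n f x.1, x.2).
Proof. by elim: n => [|n IH]; [case: x | rewrite /= IH]. Qed.

Lemma iter_mapR (A B : zmodType) (g : {additive B -> B}) n (x : A * B) :
  iter n (mapR g) x = (x.1, iter n g x.2).
Proof. by elim: n => [|n IH]; [case: x | rewrite /= IH]. Qed.

Theorem mainTheorem1 (A B : zmodType) :
  trivial_Hom B A ->
  (strongly_coHopfian (A * B)%type <->
   strongly_coHopfian A /\ strongly_coHopfian B).
Proof.
move=> H0; split.
  move=> H; split.
    move=> f; have [n Hn] := H (mapL f : {additive _ -> _}).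
    exists n => y; split; last by rewrite -addn1; apply: im_le.
    case=> x ->.
    have [z Ez] : im_iter (mapL f) n.+1 ((iter n f x, 0) : A * B).
      by apply/Hn; exists (x, 0); rewrite iter_mapL.
    by exists z.1; move: Ez; rewrite iter_mapL => -[].
  move=> g; have [n Hn] := H (mapR g : {additive _ -> _}).
  exists n => y; split; last by rewrite -addn1; apply: im_le.
  case=> x ->.
  have [z Ez] : im_iter (mapR g) n.+1 ((0, iter n g x) : A * B).
    by apply/Hn; exists (0, x); rewrite iter_mapR.
  by exists z.2; move: Ez; rewrite iter_mapR => -[].
case=> HA HB phi.
have [na Ha] := HA (alpha phi); have [nd Hd] := HB (delta phi).
have phi0b b : phi (0, b) = (0, delta phi b).
  have : (phi (0, b)).1 = 0 := H0 (hB phi) b.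
  rewrite /delta; by case: (phi (0, b)) => u v /= ->.
have fst_phi x : (phi x).1 = alpha phi x.1.
  case: x => a b.
  have -> : ((a, b) : A * B) = (a, 0) + (0, b) by rewrite pair_add addr0 add0r.
  rewrite raddfD phi0b pair_add /= addr0.
  by rewrite addr0.
have iter_fst n x : (iter n phi x).1 = iter n (alpha phi) x.1.
  by elim: n => //= n <-; rewrite fst_phi.
have iter_0b n b : iter n phi (0, b) = (0, iter n (delta phi) b).
  by elim: n => //= n ->; rewrite phi0b.
set N := (na + nd)%N.
exists (N + N)%N => y; split; last by rewrite -addn1; apply: im_le.
case=> g ->.
set h := iter N phi g.
have [t Et] : im_iter (alpha phi) N.+1 h.1.
  have : im_iter (alpha phi) na h.1.
    by apply: (@im_le _ _ _ nd); exists g.1; rewrite /h iter_fst.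
  by move/(im_prop Ha nd.+1); rewrite addnS.
set c := h.2 - (iter N.+1 phi (t, 0)).2.
have Eh : h = iter N.+1 phi (t, 0) + (0, c).
  rewrite [h]surjective_pairing [iter _ _ _]surjective_pairing.
  rewrite pair_add /= -[phi (iter N phi (t, 0))]/(iter N.+1 phi (t, 0)).
  by congr (_, _); [rewrite addr0 iter_fst -Et | rewrite /c addrC subrK].
have [b' Eb'] : im_iter (delta phi) (N + N).+1 (iter N (delta phi) c).
  have : im_iter (delta phi) nd (iter N (delta phi) c).
    by apply: (@im_le _ _ _ na); exists c; rewrite addnC.
  move/(im_prop Hd (na + N).+1).
  by rewrite /N addnS !addnA [(nd + na)%N]addnC.
exists ((t, 0) + (0, b')).
rewrite iter_add iter_0b -Eb' -iter_0b iterD -/h Eh iter_add -iterD addnS.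
done.
Qed.
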